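(* Let $\Sigma\subseteq\mathcal A^{\mathbf N}$ be a one-sided subshift over a finite alphabet $\mathcal A$ that has a finite subset $F$ with dense orbit. If the complexity function $p$ of the language of $\Sigma$ is unbounded, then this language is almost prolongable.
   Context: $\Sigma$ is closed and invariant under the shift $S$. $F\subseteq\Sigma$ has dense orbit if $\bigcup_{\omega\in F}\{S^m\omega:m\ge0\}$ is dense in $\Sigma$. The language of $\Sigma$ is the set of finite words occurring as subwords of elements of $\Sigma$; $p(n)$ is the number of its words of length $n$. A word $v$ of a language $\mathcal L$ is left-prolongable (resp. right-prolongable) if $av\in\mathcal L$ (resp. $va\in\mathcal L$) for some letter $a$; $\mathcal L$ is almost prolongable if the proportions of left-prolongable and of right-prolongable words among its words of length $n$ both tend to $1$ as $n\to\infty$. *)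

(* Defs.v *)
From HB Require Import structures.
From mathcomp Require Import all_boot all_order all_algebra.
From mathcomp Require Import all_classical all_reals all_analysis.
Set Implicit Arguments. Unset Strict Implicit. Unset Printing Implicit Defensive.
Import Order.TTheory GRing.Theory Num.Theory.
Import numFieldNormedType.Exports.
Local Open Scope classical_set_scope.

Definition shift (A : Type) (w : nat -> A) : nat -> A := fun n => w n.+1.

Definition shift_invariant (A : Type) (Sigma : set (nat -> A)) : Prop :=
  forall w, Sigma w -> Sigma (shift w).

(* Closedness in the product topology of A^N (A discrete): the basic open
   sets are the cylinders [w_0 ... w_{n-1}], so Sigma is closed iff every
   point all of whose cylinder neighbourhoods meet Sigma lies in Sigma. *)
Definition cyl_closed (A : Type) (Sigma : set (nat -> A)) : Prop :=
  forall w : nat -> A,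
    (forall n, exists2 s, Sigma s & forall i, (i < n)%N -> s i = w i) ->
    Sigma w.

(* F has dense orbit in Sigma: the union of the forward orbits of the
   elements of F meets every nonempty (cylinder) open subset of Sigma. *)
Definition dense_orbit (A : Type) (Sigma F : set (nat -> A)) : Prop :=
  forall w, Sigma w -> forall n : nat,
    exists2 f, F f & exists m : nat,
      forall i, (i < n)%N -> iter m (@shift A) f i = w i.

Definition in_language (A : Type) (Sigma : set (nat -> A)) (v : seq A) : Prop :=
  exists2 w, Sigma w & exists i : nat, v = [seq w (i + j)%N | j <- iota 0 (size v)].

Definition complexity (A : finType) (Sigma : set (nat -> A)) (n : nat) : nat :=
  #|[set v : n.-tuple A | `[< in_language Sigma v >]]|.

Definition left_prolongable (A : Type) (Sigma : set (nat -> A)) (v : seq A) : Prop :=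
  exists a : A, in_language Sigma (a :: v).

Definition right_prolongable (A : Type) (Sigma : set (nat -> A)) (v : seq A) : Prop :=
  exists a : A, in_language Sigma (rcons v a).

Definition n_left_prol (A : finType) (Sigma : set (nat -> A)) (n : nat) : nat :=
  #|[set v : n.-tuple A | `[< in_language Sigma v /\ left_prolongable Sigma v >]]|.

Definition n_right_prol (A : finType) (Sigma : set (nat -> A)) (n : nat) : nat :=
  #|[set v : n.-tuple A | `[< in_language Sigma v /\ right_prolongable Sigma v >]]|.

Definition almost_prolongable (R : realType) (A : finType) (Sigma : set (nat -> A)) : Prop :=
  (fun n : nat => ((n_left_prol Sigma n)%:R / (complexity Sigma n)%:R : R)%R)
     @ \oo --> (1%R : R) /\
  (fun n : nat => ((n_right_prol Sigma n)%:R / (complexity Sigma n)%:R : R)%R)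
     @ \oo --> (1%R : R).

(* Main.v *)
Require Import Defs.
From HB Require Import structures.
From mathcomp Require Import all_boot all_order all_algebra.
From mathcomp Require Import all_classical all_reals all_analysis.
From mathcomp Require Import zify.
Import Order.TTheory GRing.Theory Num.Theory.
Import numFieldNormedType.Exports.

Section Aux.
Variables (A : finType) (Sigma : set (nat -> A)).

Lemma lang_left (v : seq A) w i : Sigma w ->
  v = [seq w (i + j) | j <- iota 0 (size v)] -> (0 < i)%N -> left_prolongable Sigma v.
Proof.
move=> Sw H i0; exists (w i.-1); exists w => //; exists i.-1.
rewrite /= addn0 {1}H.
have -> : iota 1 (size v) = [seq 1 + j | j <- iota 0 (size v)] by rewrite -iotaDl.
rewrite -map_comp; congr (_ :: _); apply: eq_map => j /=; congr w; lia.
Qed.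

Lemma lang_right (v : seq A) : in_language Sigma v -> right_prolongable Sigma v.
Proof.
move=> [w Sw [i H]]; exists (w (i + size v)); exists w => //; exists i.
by rewrite size_rcons -cats1 {1}H -addn1 iotaD map_cat /= add0n.
Qed.

Lemma val_mkt m (g : nat -> A) : val [tuple g (val j) | j < m] = [seq g j | j <- iota 0 m].
Proof. by rewrite /= -val_enum_ord -map_comp -val_ord_tuple. Qed.

Lemma tnth_lang n (t : n.-tuple A) w i :
  val t = [seq w (i + j) | j <- iota 0 n] -> forall j : 'I_n, tnth t j = w (i + j).
Proof.
move=> H j; rewrite (tnth_nth (w 0)) H (nth_map 0) ?size_iota // nth_iota //.
Qed.

Definition restr n m (le : (n <= m)%N) (t : m.-tuple A) : n.-tuple A :=
  [tuple tnth t (widen_ord le j) | j < n].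

Definition Lset n := [set v : n.-tuple A | `[< in_language Sigma v >]].

Lemma cE n : complexity Sigma n = #|Lset n|.
Proof. rewrite /complexity; apply: eq_card => x; rewrite !inE.
apply/idP/idP => [/set_mem|H]; [by [] | exact: mem_set]. Qed.

Definition LPset n := [set v : n.-tuple A | `[< in_language Sigma v /\ left_prolongable Sigma v >]].

Lemma lE n : n_left_prol Sigma n = #|LPset n|.
Proof. rewrite /n_left_prol; apply: eq_card => x; rewrite !inE.
apply/idP/idP => [/set_mem|H]; [by [] | exact: mem_set]. Qed.

Lemma rE n : n_right_prol Sigma n = complexity Sigma n.
Proof. rewrite cE /n_right_prol; apply: eq_card => x; rewrite !inE.
apply/idP/idP => [/set_mem|H]. by move/asboolP => [H _]; apply/asboolP.
apply: mem_set; move/asboolP: H => H; apply/asboolP; split => //; exact: lang_right. Qed.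

Lemma complexity_mono n m : (n <= m)%N -> (complexity Sigma n <= complexity Sigma m)%N.
Proof.
move=> le; rewrite !cE.
apply: (leq_trans _ (leq_imset_card (@restr n m le) (Lset m))).
apply: subset_leq_card; apply/fintype.subsetP => t; rewrite inE => /asboolP [w Sw [i H]].
rewrite size_tuple in H.
apply/imsetP; exists [tuple w (i + val j) | j < m].
  rewrite inE; apply/asboolP; exists w => //; exists i.
  by rewrite size_tuple (val_mkt m (fun k => w (i + k))).
apply: eq_from_tnth => j; rewrite tnth_mktuple tnth_mktuple /=.
exact: tnth_lang.
Qed.

Lemma iter_shift m (f : nat -> A) j : iter m (@Defs.shift A) f j = f (m + j).
Proof. by elim: m j => [|m IH] j //=; rewrite /Defs.shift IH addSnnS. Qed.

Lemma left_le n : (n_left_prol Sigma n <= complexity Sigma n)%N.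
Proof.
rewrite lE cE; apply: subset_leq_card; apply/fintype.subsetP => t; rewrite !inE; by case.
Qed.

Lemma left_count (F : set (nat -> A)) (s : seq (nat -> A)) n :
  (forall f, F f -> Sigma f) -> (forall f, F f -> f \in s) -> dense_orbit Sigma F ->
  (complexity Sigma n <= n_left_prol Sigma n + size s)%N.
Proof.
move=> FS Fs dF; rewrite cE lE.
set LP := LPset n.
set B := [set t : n.-tuple A | t \in [seq [tuple f (val j) | j < n] | f <- s]].
apply: (@leq_trans #|LP :|: B|).
  apply: subset_leq_card; apply/fintype.subsetP => t; rewrite inE => /asboolP Lt.
  have [lp|nlp] := pselect (left_prolongable Sigma t).
    by rewrite inE; apply/orP; left; rewrite inE; apply/asboolP.
  rewrite inE; apply/orP; right; rewrite inE.
  move: (Lt) => [w Sw [i H]].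
  have i0 : i = 0%N.
    case: i H => // i H; exfalso; apply: nlp; exact: (lang_left _ _ _ Sw H).
  subst i; rewrite size_tuple in H.
  have [f Ff [m Hm]] := dF w Sw n.
  have m0 : m = 0%N.
    case: m Hm => // m Hm; exfalso; apply: nlp.
    apply: (@lang_left _ f m.+1 (FS f Ff)) => //.
    rewrite size_tuple H; apply/eq_in_map => j; rewrite mem_iota add0n => /andP[_ jn].
    by rewrite -Hm // iter_shift.
  subst m.
  have -> : t = [tuple f (val j) | j < n].
    apply: eq_from_tnth => j; rewrite tnth_mktuple (tnth_lang _ _ _ _ H) add0n -Hm //.
  by apply: map_f; apply: Fs.
apply: leq_trans (leq_card_setU _ _) _; rewrite leq_add2l.
rewrite -(size_map (fun f => [tuple f (val j) | j < n]) s).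
apply: (leq_trans _ (card_size _)).
apply: subset_leq_card; apply/fintype.subsetP => t.
by rewrite inE.
Qed.
End Aux.

Section Ana.
Local Open Scope ring_scope.
Local Open Scope classical_set_scope.
Lemma cvg_ratio (R : realType) (a b : nat -> nat) (K : nat) :
  (forall n, (a n <= b n)%N) -> (forall n, (b n <= a n + K)%N) ->
  (forall M : nat, exists N, forall n, (N <= n)%N -> (M < b n)%N) ->
  (fun n : nat => ((a n)%:R / (b n)%:R : R)%R) @ \oo --> (1%R : R).
Proof.
move=> hab hba hb; apply/cvgrPdist_le => e e0.
set x := (K%:R / e : R).
have x0 : 0 <= x by rewrite divr_ge0 // ltW.
have Hx := archi_boundP x0.
have [N HN] := hb (Num.Def.archi_bound x).
exists N => // n /= Nn.
have Mb := HN n Nn.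
have bR : (0 : R) < (b n)%:R by rewrite ltr0n (leq_ltn_trans (leq0n _) Mb).
rewrite -{1}(divff (lt0r_neq0 bR)) -mulrBl -natrB ?hab //.
rewrite ger0_norm ?divr_ge0 ?ler0n //.
rewrite ler_pdivrMr //.
apply: (@le_trans _ _ (K%:R)).
  by rewrite ler_nat leq_subLR; apply: hba.
have xb : x < (b n)%:R by apply: (lt_trans Hx); rewrite ltr_nat.
by rewrite -(divfK (lt0r_neq0 e0) K%:R) -/x mulrC ler_pM2l // ltW.
Qed.
End Ana.

Local Open Scope classical_set_scope.

Theorem proposition2p14 (R : realType) (A : finType) (Sigma F : set (nat -> A)) :
  cyl_closed Sigma -> shift_invariant Sigma ->
  F `<=` Sigma -> finite_set F -> dense_orbit Sigma F ->
  (forall M : nat, exists n : nat, (M < complexity Sigma n)%N) ->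
  almost_prolongable R Sigma.
Proof.
move=> _ _ FS fin dF unb.
have [s Fs] := (finite_seqP F).1 fin.
have Fs' : forall f, F f -> f \in s by move=> f; rewrite Fs.
have hb : forall M : nat, exists N, forall n, (N <= n)%N -> (M < complexity Sigma n)%N.
  move=> M; have [N HN] := unb M; exists N => n Nn.
  exact: (leq_trans HN (complexity_mono _ _ _ _ Nn)).
split.
  apply: (@cvg_ratio R _ _ (size s)) => //.
    by move=> n; exact: left_le.
  by move=> n; exact: (left_count _ _ _ _ _ FS Fs' dF).
have -> : (fun n : nat => ((n_right_prol Sigma n)%:R / (complexity Sigma n)%:R : R)%R) =
   (fun n : nat => ((complexity Sigma n)%:R / (complexity Sigma n)%:R : R)%R).
  by apply: funext => n; rewrite rE.
by apply: (@cvg_ratio R _ _ 0) => // n; rewrite addn0.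
Qed.
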